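(* Let $r\ge2$ and $\alpha,\delta>0$ with $\delta\le\alpha$, $\delta\le 1/(2r)$ and $\alpha<1/(4r(r+1))$. Let $Q$ be an $[r]$-coloured graph on a subset of $[n]$, let $\mathcal{C}$ be a nonempty family of $\delta$-balanced $r$-cuts of $[n]$ each compatible with $Q$, and let $\xi\le1$. Suppose that for every ordered $r$-tuple $S=(S_1,\dots,S_r)$ of pairwise disjoint subsets of $[n]$ that is compatible with $Q$ and satisfies $\min_i|S_i|\ge(1-4r\alpha)n/r$ we are given an event $F(S)$ about a graph $G$ on $[n]$ that is decreasing (closed under deleting edges) and determined by $G\cap\mathrm{ext}(S)$, and satisfies $\Pr(F(S)\mid Q\subseteq G_{n,p})\le\xi$. Let $\mathcal{R}$ be the event that $G_{n,p}$ is $\mathcal{C}$-rigid and its $\mathcal{C}$-core can be labelled $\{S_1,\dots,S_r\}$ with $V^i(Q)\subseteq S_i$ for all $i\in[r]$ such that $F(S_1,\dots,S_r)$ holds. Then $\Pr(\mathcal{R}\mid Q\subseteq G_{n,p})\le r!\cdot\xi$.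
   Context: An $[r]$-coloured graph has vertices coloured from $[r]$ (not necessarily properly); $V^k(Q)$ is the set of vertices of colour $k$. A tuple $(V_1,\dots,V_r)$ of pairwise disjoint sets is compatible with $Q$ if $V^k(Q)\subseteq V_k$ for all $k$. An $r$-cut is an ordered partition of $[n]$ into $r$ parts; it is $\delta$-balanced if each part has size $(1\pm\delta)n/r$; $\mathrm{ext}(S)$ is the set of pairs meeting two distinct $S_i$. $b_{\mathcal{C}}(G)=\max_{\Pi\in\mathcal{C}}|G\cap\mathrm{ext}(\Pi)|$, $\mathrm{maxcut}_{\mathcal{C}}(G)$ is the set of $\Pi\in\mathcal{C}$ attaining it; $x\equiv_{\mathcal{C},G}y$ if $x,y$ lie in the same part of every cut in $\mathrm{maxcut}_{\mathcal{C}}(G)$, and the classes are $(\mathcal{C},G)$-components. $G$ is $\mathcal{C}$-rigid if at least $(1-\alpha)n^2/(2r)$ unordered pairs of distinct vertices are equivalent. For a $\mathcal{C}$-rigid $G$ there are exactly $r$ components of size greater than $(1-4r\alpha)n/r$; this unordered collection is the $\mathcal{C}$-core of $G$. $Q\subseteq G_{n,p}$ means all edges of $Q$ are in $G_{n,p}$. *)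

(* Defs.v *)
From HB Require Import structures.
From mathcomp Require Import all_boot all_order all_algebra.
Set Implicit Arguments. Unset Strict Implicit. Unset Printing Implicit Defensive.
Import Order.TTheory GRing.Theory Num.Theory.
Local Open Scope ring_scope.

(* Vertex set [n] = 'I_n, colour set [r] = 'I_r.  A graph on [n] is a set
   of unordered pairs, i.e. a set of 2-element subsets of 'I_n. *)
Definition pairs (n : nat) : {set {set 'I_n}} := [set e : {set 'I_n} | #|e| == 2%N].

Definition rtuple (n r : nat) := {ffun 'I_r -> {set 'I_n}}.

Definition pw_disjoint {n r : nat} (S : rtuple n r) : bool :=
  [forall i, forall j, (i != j) ==> [disjoint S i & S j]].

Definition is_cut {n r : nat} (S : rtuple n r) : bool :=
  pw_disjoint S && (\bigcup_i S i == [set: 'I_n]).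

Definition balanced {R : realFieldType} {n r : nat} (delta : R) (S : rtuple n r) : bool :=
  [forall i, ((1 - delta) * n%:R / r%:R <= (#|S i|)%:R) &&
             ((#|S i|)%:R <= (1 + delta) * n%:R / r%:R)].

Definition ext {n r : nat} (S : rtuple n r) : {set {set 'I_n}} :=
  [set e in pairs n | [exists i, exists j, (i != j) &&
      [exists x in S i, exists y in S j, e == [set x; y]]]].

(* An [r]-coloured graph Q on a subset VQ of [n]: colouring colQ (relevant on
   VQ) and edge set EQ (pairs inside VQ).  V^k(Q) = vertices of colour k. *)
Definition colour_class {n r : nat} (VQ : {set 'I_n}) (colQ : 'I_n -> 'I_r) (k : 'I_r)
  : {set 'I_n} := [set v in VQ | colQ v == k].

Definition compatible {n r : nat} (VQ : {set 'I_n}) (colQ : 'I_n -> 'I_r) (S : rtuple n r)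
  : bool := [forall k, colour_class VQ colQ k \subset S k].

Definition gnp_w {R : realFieldType} {n : nat} (p : R) (G : {set {set 'I_n}}) : R :=
  \prod_(e in pairs n) (if e \in G then p else 1 - p).

Definition Pr {R : realFieldType} (n : nat) (p : R) (A : {set {set 'I_n}} -> bool) : R :=
  \sum_(G : {set {set 'I_n}} | (G \subset pairs n) && A G) gnp_w p G.

Definition condPr {R : realFieldType} (n : nat) (p : R)
  (A B : {set {set 'I_n}} -> bool) : R :=
  @Pr R n p (fun G => A G && B G) / @Pr R n p B.

Definition contains {n : nat} (EQ : {set {set 'I_n}}) (G : {set {set 'I_n}}) : bool :=
  EQ \subset G.

Definition bC {n r : nat} (C : {set rtuple n r}) (G : {set {set 'I_n}}) : nat :=
  \max_(Pi in C) #|G :&: ext Pi|.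

Definition maxcut {n r : nat} (C : {set rtuple n r}) (G : {set {set 'I_n}})
  : {set rtuple n r} := [set Pi in C | #|G :&: ext Pi| == bC C G].

Definition cequiv {n r : nat} (C : {set rtuple n r}) (G : {set {set 'I_n}}) (x y : 'I_n)
  : bool := [forall Pi in maxcut C G, forall i, (x \in Pi i) == (y \in Pi i)].

Definition component {n r : nat} (C : {set rtuple n r}) (G : {set {set 'I_n}}) (x : 'I_n)
  : {set 'I_n} := [set y | cequiv C G x y].

Definition rigid {R : realFieldType} {n r : nat} (alpha : R) (C : {set rtuple n r})
  (G : {set {set 'I_n}}) : bool :=
  (1 - alpha) * (n%:R ^+ 2) / (2 * r%:R) <=
  (#|[set e in pairs n | [forall x in e, forall y in e, cequiv C G x y]]|)%:R.

Definition big_component {R : realFieldType} {n r : nat} (alpha : R)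
  (C : {set rtuple n r}) (G : {set {set 'I_n}}) (X : {set 'I_n}) : bool :=
  [exists x, X == component C G x] &&
  ((1 - 4 * r%:R * alpha) * n%:R / r%:R < (#|X|)%:R).

(* The event R: G is C-rigid and its C-core (the collection of big components)
   can be labelled (S_1,...,S_r) with V^i(Q) subseteq S_i and F(S) holds. *)
Definition eventR {R : realFieldType} {n r : nat} (alpha : R) (C : {set rtuple n r})
  (VQ : {set 'I_n}) (colQ : 'I_n -> 'I_r)
  (F : rtuple n r -> {set {set 'I_n}} -> bool) (G : {set {set 'I_n}}) : bool :=
  rigid alpha C G &&
  [exists S : rtuple n r,
     [&& [forall i, big_component alpha C G (S i)],
         injectiveb S,
         [forall X : {set 'I_n}, big_component alpha C G X ==> [exists i, S i == X]],
         compatible VQ colQ S & F S G]].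

(* Main.v *)
Require Import Defs.
From HB Require Import structures.
From mathcomp Require Import all_boot all_order all_algebra.
From mathcomp Require Import ring lra.
Set Implicit Arguments. Unset Strict Implicit. Unset Printing Implicit Defensive.
Import Order.TTheory GRing.Theory Num.Theory.
Local Open Scope ring_scope.

Section Harris.
Variables (U : finType) (R : realFieldType) (q : U -> R).

Definition hw (D G : {set U}) : R := \prod_(e in D) (if e \in G then q e else 1 - q e).
Definition mu (D : {set U}) (f : {set U} -> R) : R := \sum_(G : {set U} | G \subset D) hw D G * f G.

Lemma sum_split (D : {set U}) u (h : {set U} -> R) : u \in D ->
  \sum_(G : {set U} | G \subset D) h G = \sum_(G : {set U} | G \subset D :\ u) (h G + h (u |: G)).
Proof.
move=> uD; rewrite big_split /= (bigID (fun G : {set U} => u \in G)) /= addrC.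
congr (_ + _).
  by apply: eq_bigl => G; rewrite subsetD1.
rewrite (reindex_onto (fun G => u |: G) (fun G => G :\ u)); last first.
  by move=> G /andP [_ uG]; rewrite setD1K.
apply: eq_bigl => G; rewrite setU11 andbT subUset sub1set uD /= subsetD1.
congr (_ && _).
case: (boolP (u \in G)) => uG /=.
  apply/negbTE/eqP => E.
  have : u \in (u |: G) :\ u by rewrite E.
  by rewrite !inE eqxx.
by rewrite setU1K // eqxx.
Qed.

Lemma hw_out (D : {set U}) (u : U) (G : {set U}) : u \in D -> u \notin G -> hw D G = (1 - q u) * hw (D :\ u) G.
Proof.
move=> uD uG; rewrite /hw (bigD1 u) //= (negbTE uG); congr (_ * _).
by apply: eq_bigl => e; rewrite in_setD1 andbC.
Qed.

Lemma hw_in (D : {set U}) (u : U) (G : {set U}) : u \in D -> u \notin G -> hw D (u |: G) = q u * hw (D :\ u) G.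
Proof.
move=> uD uG; rewrite /hw (bigD1 u) //= setU11; congr (_ * _).
rewrite [in RHS](eq_bigl (fun e => (e \in D) && (e != u))); last first.
  by move=> e; rewrite in_setD1 andbC.
by apply: eq_bigr => e /andP [_ eu]; rewrite in_setU1 (negbTE eu).
Qed.

Lemma mu_split (D : {set U}) (u : U) (f : {set U} -> R) : u \in D ->
  mu D f = (1 - q u) * mu (D :\ u) f + q u * mu (D :\ u) (fun G => f (u |: G)).
Proof.
move=> uD; rewrite /mu (sum_split (fun G => hw D G * f G) uD) !mulr_sumr -big_split /=.
apply: eq_bigr => G; rewrite subsetD1 => /andP [_ uG].
by rewrite (hw_out uD uG) (hw_in uD uG) !mulrA.
Qed.

Lemma mu0 (f : {set U} -> R) : mu set0 f = f set0.
Proof.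
rewrite /mu (eq_bigl (fun G => G == set0)); last by move=> G; rewrite subset0.
by rewrite big_pred1_eq /hw big_set0 mul1r.
Qed.

Lemma mu_ext (D : {set U}) (f g : {set U} -> R) : (forall G : {set U}, G \subset D -> f G = g G) -> mu D f = mu D g.
Proof. by move=> h; apply: eq_bigr => G GD; rewrite h. Qed.

Lemma mu_sum (D : {set U}) (I : finType) (F : I -> {set U} -> R) :
  mu D (fun G => \sum_i F i G) = \sum_i mu D (F i).
Proof.
rewrite /mu; under eq_bigr do rewrite mulr_sumr.
exact: exchange_big.
Qed.

Lemma mu_scale (D : {set U}) c (f : {set U} -> R) : mu D (fun G => c * f G) = c * mu D f.
Proof.
rewrite /mu mulr_sumr; apply: eq_bigr => G _; ring.
Qed.

Hypothesis hq : forall u, 0 <= q u <= 1.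

Lemma hw_ge0 (D G : {set U}) : 0 <= hw D G.
Proof.
apply: prodr_ge0 => e _; case: ifP => _; have /andP [h1 h2] := hq e => //.
by rewrite subr_ge0.
Qed.

Lemma mu_le (D : {set U}) (f g : {set U} -> R) : (forall G : {set U}, G \subset D -> f G <= g G) -> mu D f <= mu D g.
Proof.
move=> h; apply: ler_sum => G GD; apply: ler_wpM2l; first exact: hw_ge0.
exact: h.
Qed.

Lemma mu1 (D : {set U}) : mu D (fun _ => 1) = 1.
Proof.
have [m Dm] := ubnP #|D|; elim: m D Dm => // m IH D Dm.
have [->|[u uD]] := set_0Vmem D; first by rewrite mu0.
rewrite (mu_split _ uD) !IH; first by ring.
all: by move: Dm; rewrite (cardsD1 u) uD.
Qed.

Lemma mu_ge0 (D : {set U}) (f : {set U} -> R) : (forall G : {set U}, G \subset D -> 0 <= f G) -> 0 <= mu D f.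
Proof.
move=> h; apply: sumr_ge0 => G GD; apply: mulr_ge0; [exact: hw_ge0 | exact: h].
Qed.

Lemma setU1D1C (u v : U) (H : {set U}) : v != u -> u |: (H :\ v) = (u |: H) :\ v.
Proof.
move=> vu; apply/setP => z; rewrite !inE.
case: (z =P u) => [->|] /=; last by [].
by rewrite eq_sym vu.
Qed.

Lemma harris (X : pred U) (D : {set U}) (f g : {set U} -> R) :
  (forall v (H : {set U}), v \in D -> X v -> H \subset D -> f (H :\ v) <= f (v |: H)) ->
  (forall v (H : {set U}), v \in D -> X v -> H \subset D -> g (v |: H) <= g (H :\ v)) ->
  (forall v (H : {set U}), v \in D -> ~~ X v -> H \subset D -> g (v |: H) = g (H :\ v)) ->
  mu D (fun G => f G * g G) <= mu D f * mu D g.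
Proof.
have [m Dm] := ubnP #|D|; elim: m D Dm f g => // m IH D Dm f g hf hg hg'.
have [->|[u uD]] := set_0Vmem D; first by rewrite !mu0.
have D'm : (#|D :\ u| < m)%N by move: Dm; rewrite (cardsD1 u) uD.
have sD : D :\ u \subset D by apply: subD1set.
have hsub : forall v (H : {set U}), v \in D :\ u -> H \subset D :\ u -> v != u /\ v \in D /\ H \subset D
  /\ u |: H \subset D.
  move=> v H; rewrite in_setD1 => /andP [vu vD] HD; do 3?split => //.
    exact: subset_trans HD sD.
  by rewrite subUset sub1set uD (subset_trans HD sD).
rewrite !(mu_split _ uD).
have IH0 := IH _ D'm f g.
have IH1 := IH _ D'm (fun G => f (u |: G)) (fun G => g (u |: G)).
have {IH0} IH0 : mu (D :\ u) (fun G => f G * g G) <= mu (D :\ u) f * mu (D :\ u) g.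
  apply: IH0.
  - by move=> v H vD Xv HD; have [? [? [? ?]]] := hsub v H vD HD; exact: hf.
  - by move=> v H vD Xv HD; have [? [? [? ?]]] := hsub v H vD HD; exact: hg.
  - by move=> v H vD Xv HD; have [? [? [? ?]]] := hsub v H vD HD; exact: hg'.
have {IH1} IH1 : mu (D :\ u) (fun G => f (u |: G) * g (u |: G)) <=
    mu (D :\ u) (fun G => f (u |: G)) * mu (D :\ u) (fun G => g (u |: G)).
  apply: IH1.
  - move=> v H vD Xv HD; have [vu [vD' [HD' uHD]]] := hsub v H vD HD.
    by rewrite setU1D1C // setUCA; apply: (hf v (u |: H)).
  - move=> v H vD Xv HD; have [vu [vD' [HD' uHD]]] := hsub v H vD HD.
    by rewrite setU1D1C // setUCA; apply: (hg v (u |: H)).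
  - move=> v H vD Xv HD; have [vu [vD' [HD' uHD]]] := hsub v H vD HD.
    by rewrite setU1D1C // setUCA; apply: (hg' v (u |: H)).
have eqD1 : forall G : {set U}, G \subset D :\ u -> G :\ u = G.
  move=> G; rewrite subsetD1 => /andP [_ uG]; apply/setP => z; rewrite !inE.
  by case: eqP => // ->; rewrite (negbTE uG).
have [q0 q1] := andP (hq u).
case: (boolP (X u)) => Xu.
  have a01 : mu (D :\ u) f <= mu (D :\ u) (fun G => f (u |: G)).
    by apply: (@mu_le (D :\ u) f (fun G => f (u |: G))) => G GD; have := hf u G uD Xu (subset_trans GD sD); rewrite eqD1.
  have b10 : mu (D :\ u) (fun G => g (u |: G)) <= mu (D :\ u) g.
    by apply: (@mu_le (D :\ u) (fun G => g (u |: G)) g) => G GD; have := hg u G uD Xu (subset_trans GD sD); rewrite eqD1.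
  have key : 0 <= q u * (1 - q u) * ((mu (D :\ u) (fun G => f (u |: G)) - mu (D :\ u) f)
     * (mu (D :\ u) g - mu (D :\ u) (fun G => g (u |: G)))).
    by rewrite !mulr_ge0 // subr_ge0.
  nra.
have b10 : mu (D :\ u) (fun G => g (u |: G)) = mu (D :\ u) g.
  by apply: mu_ext => G GD; rewrite (hg' u G uD Xu (subset_trans GD sD)) eqD1.
rewrite b10 in IH1 *.
nra.
Qed.
End Harris.

Lemma count_add n (G E : {set {set 'I_n}}) v : v \notin G ->
  #|(v |: G) :&: E| = ((v \in E) + #|G :&: E|)%N.
Proof.
move=> vG; case: (boolP (v \in E)) => vE.
  have -> : (v |: G) :&: E = v |: (G :&: E).
    by apply/setP => z; rewrite !inE; case: eqP => // ->; rewrite vE.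
  by rewrite cardsU1 inE (negbTE vG).
have -> : (v |: G) :&: E = G :&: E.
  by apply/setP => z; rewrite !inE; case: eqP => // ->; rewrite (negbTE vE) (negbTE vG).
by [].
Qed.

Section Comb.
Variables (n r : nat) (C : {set rtuple n r}) (G : {set {set 'I_n}}).

Lemma cequiv_at a b Pi k : cequiv C G a b -> Pi \in maxcut C G -> (a \in Pi k) = (b \in Pi k).
Proof. by move=> /forallP/(_ Pi) h PiM; move: h; rewrite PiM => /forallP/(_ k)/eqP. Qed.

Lemma comp_eq x0 y0 z : cequiv C G x0 z -> cequiv C G y0 z ->
  component C G x0 = component C G y0.
Proof.
move=> h1 h2; apply/setP => w; rewrite !inE /cequiv.
apply: eq_forallb => Pi; case PiM: (Pi \in maxcut C G) => //=.
apply: eq_forallb => k.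
by rewrite (cequiv_at k h1 PiM) (cequiv_at k h2 PiM).
Qed.

Lemma comp_disj (X Y : {set 'I_n}) x0 y0 : X = component C G x0 -> Y = component C G y0 ->
  X != Y -> [disjoint X & Y].
Proof.
move=> hX hY XY; rewrite -setI_eq0; apply/eqP/setP => z; rewrite !inE.
apply/negbTE/negP => /andP [zX zY].
move: zX zY; rewrite hX hY !inE => h1 h2.
by move: XY; rewrite hX hY (comp_eq h1 h2) eqxx.
Qed.
End Comb.

Lemma ext_maxcut (R : realFieldType) (n r : nat) (alpha delta : R) (C : {set rtuple n r})
  (VQ : {set 'I_n}) (colQ : 'I_n -> 'I_r) (G : {set {set 'I_n}}) (S : rtuple n r) v :
  (forall Pi, Pi \in C -> [&& is_cut Pi, balanced delta Pi & compatible VQ colQ Pi]) ->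
  (1 + delta) * n%:R / r%:R <= 2 * ((1 - 4 * r%:R * alpha) * n%:R / r%:R) ->
  (forall i, big_component alpha C G (S i)) -> injectiveb S -> v \in ext S ->
  forall Pi, Pi \in maxcut C G -> v \in ext Pi.
Proof.
move=> hC hN hbig hinj vext Pi PiM.
have PiC : Pi \in C by move: PiM; rewrite inE => /andP [].
have /and3P [cut bal _] := hC Pi PiC.
move: cut => /andP [_ /eqP cover].
move: vext; rewrite inE => /andP [vp /existsP [i /existsP [j /andP [ij /existsP [x /andP [xi /existsP [y /andP [yj /eqP vxy]]]]]]]].
have : x \in \bigcup_k Pi k by rewrite cover inE.
move=> /bigcupP [k _ xk].
have : y \in \bigcup_k Pi k by rewrite cover inE.
move=> /bigcupP [k' _ yk'].
rewrite inE vp /=; apply/existsP; exists k; apply/existsP; exists k'.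
apply/andP; split; last first.
  apply/existsP; exists x; rewrite xk /=; apply/existsP; exists y; by rewrite yk' vxy eqxx.
apply/negP => /eqP kk; rewrite -kk in yk'.
have /andP [/existsP [x0 /eqP Si] szi] := hbig i.
have /andP [/existsP [y0 /eqP Sj] szj] := hbig j.
have sub : forall (X : {set 'I_n}) a b, X = component C G a -> b \in X -> b \in Pi k -> X \subset Pi k.
  move=> X a b hX bX bk; apply/subsetP => z; rewrite hX inE => hz.
  move: bX; rewrite hX inE => hb.
  by rewrite -(cequiv_at k hz PiM) (cequiv_at k hb PiM).
have sik := sub _ _ _ Si xi xk.
have sjk := sub _ _ _ Sj yj yk'.
have dis : [disjoint S i & S j].
  apply: (comp_disj Si Sj); apply: contra ij => /eqP e.
  by apply/eqP; apply: (injectiveP _ hinj).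
have card : (#|S i| + #|S j| <= #|Pi k|)%N.
  have <- : #|S i :|: S j| = (#|S i| + #|S j|)%N.
    by rewrite cardsU (disjoint_setI0 dis) cards0 subn0.
  by apply: subset_leq_card; rewrite subUset sik sjk.
have /forallP/(_ k)/andP [_ hi] := bal.
move: card; rewrite -(ler_nat R) natrD => card.
set t := (1 - 4 * r%:R * alpha) * n%:R / r%:R in szi szj hN.
move: (lt_le_trans (ltrD szi szj) (le_trans card (le_trans hi hN))).
by rewrite mulr_natl mulr2n ltxx.
Qed.

Lemma maxcut_add (n r : nat) (C : {set rtuple n r}) (G : {set {set 'I_n}}) v :
  C != set0 -> v \notin G -> (forall Pi, Pi \in maxcut C G -> v \in ext Pi) ->
  maxcut C (v |: G) = maxcut C G.
Proof.
move=> C0 vG hM.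
have C0' : (0 < #|C|)%N by rewrite card_gt0.
have [Pi0 Pi0C Pi0max] := eq_bigmax_cond (fun Pi => #|G :&: ext Pi|) C0'.
have Pi0M : Pi0 \in maxcut C G by rewrite inE Pi0C /bC Pi0max eqxx.
have hb : bC C (v |: G) = (bC C G).+1.
  apply/eqP; rewrite eqn_leq; apply/andP; split.
    apply/bigmax_leqP => Pi PiC; rewrite (count_add _ vG).
    rewrite -addn1 addnC leq_add ?leq_b1 //.
    by rewrite /bC; exact: (leq_bigmax_cond (F := fun Pi => #|G :&: ext Pi|) Pi PiC).
  rewrite /bC Pi0max.
  have := leq_bigmax_cond (F := fun Pi => #|(v |: G) :&: ext Pi|) Pi0 Pi0C.
  by rewrite (count_add _ vG) (hM _ Pi0M).
apply/setP => Pi; rewrite !inE; case PiC: (Pi \in C) => //=.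
rewrite hb (count_add _ vG).
have le : (#|G :&: ext Pi| <= bC C G)%N.
  by rewrite /bC; exact: (leq_bigmax_cond (F := fun Pi => #|G :&: ext Pi|) Pi PiC).
case vE: (v \in ext Pi) => /=; first by rewrite add1n eqSS.
rewrite add0n; apply/idP/idP => [/eqP e|/eqP e]; first by move: le; rewrite e ltnn.
by move: (hM Pi); rewrite inE PiC /= e eqxx vE => /(_ isT).
Qed.

Definition qf (R : realFieldType) n (p : R) (EQ : {set {set 'I_n}}) (e : {set 'I_n}) : R :=
  if e \in EQ then 1 else p.

Lemma qf_01 (R : realFieldType) (n : nat) (p : R) (EQ : {set {set 'I_n}}) : 0 < p -> p <= 1 -> forall e, 0 <= qf p EQ e <= 1.
Proof. by move=> p0 p1 e; rewrite /qf; case: ifP => _; rewrite ?ler01 ?lexx ?p1 ?ltW. Qed.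

Lemma Pr_mu (R : realFieldType) n (p : R) (EQ : {set {set 'I_n}}) (A : {set {set 'I_n}} -> bool) :
  EQ \subset pairs n ->
  @Pr R n p (fun G => A G && contains EQ G) = p ^+ #|EQ| * mu (qf p EQ) (pairs n) (fun G => (A G)%:R).
Proof.
move=> EQD; rewrite /Pr /mu mulr_sumr big_mkcondr /=.
apply: eq_bigr => G GD; rewrite /contains.
case: (boolP (EQ \subset G)) => EG.
  have -> : gnp_w p G = p ^+ #|EQ| * hw (qf p EQ) (pairs n) G.
    rewrite /gnp_w /hw (bigID (fun e => e \in EQ)) /=.
    rewrite [in RHS](bigID (fun e => e \in EQ)) /=.
    rewrite [X in _ = _ * (X * _)]big1 ?mul1r; last first.
      by move=> e /andP [_ eE]; rewrite (subsetP EG _ eE) /qf eE.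
    congr (_ * _).
      rewrite (eq_bigr (fun _ => p)); last by move=> e /andP [_ eE]; rewrite (subsetP EG _ eE).
      rewrite -prodr_const; apply: eq_bigl => e.
      by apply/andP/idP => [[] //|eE]; split => //; apply: (subsetP EQD).
    by apply: eq_bigr => e /andP [_ eE]; rewrite /qf (negbTE eE).
  by rewrite andbT; case: (A G); rewrite ?mulr1 ?mulr0.
have [e eE eG] := subsetPn EG.
rewrite andbF /hw (bigD1 e) /=; last exact: (subsetP EQD).
by rewrite (negbTE eG) /qf eE subrr !mul0r mulr0.
Qed.

Lemma condPr_mu (R : realFieldType) n (p : R) (EQ : {set {set 'I_n}}) (A : {set {set 'I_n}} -> bool) :
  0 < p -> p <= 1 -> EQ \subset pairs n ->
  @condPr R n p A (contains EQ) = mu (qf p EQ) (pairs n) (fun G => (A G)%:R).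
Proof.
move=> p0 p1 EQD; rewrite /condPr Pr_mu //.
have kd := Pr_mu p (fun _ => true) EQD.
change (@Pr R n p (contains EQ) = p ^+ #|EQ| * mu (qf p EQ) (pairs n) (fun=> true%:R)) in kd.
rewrite kd.
have -> : mu (qf p EQ) (pairs n) (fun=> true%:R) = mu (qf p EQ) (pairs n) (fun _ => 1) by [].
rewrite mu1 mulr1 -mulrA mulrCA mulfV ?mulr1 //.
by rewrite expf_neq0 // gt_eqF.
Qed.

Definition Aev (R : realFieldType) (n r : nat) (alpha : R) (C : {set rtuple n r})
  (VQ : {set 'I_n}) (colQ : 'I_n -> 'I_r) (S : rtuple n r) (G : {set {set 'I_n}}) : bool :=
  rigid alpha C G &&
  [&& [forall i, big_component alpha C G (S i)],
      injectiveb S,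
      [forall X : {set 'I_n}, big_component alpha C G X ==> [exists i, S i == X]]
    & compatible VQ colQ S].

Lemma Aev_eq (R : realFieldType) (n r : nat) (alpha : R) (C : {set rtuple n r})
  (VQ : {set 'I_n}) (colQ : 'I_n -> 'I_r) (S : rtuple n r) (G1 G0 : {set {set 'I_n}}) :
  maxcut C G1 = maxcut C G0 -> Aev alpha C VQ colQ S G1 = Aev alpha C VQ colQ S G0.
Proof. by move=> e; rewrite /Aev /rigid /big_component /component /cequiv e. Qed.

Lemma mu_zero (U : finType) (R : realFieldType) (q : U -> R) D : mu q D (fun _ => 0) = 0.
Proof. by rewrite /mu big1 // => G _; rewrite mulr0. Qed.

Lemma count_A (R : realFieldType) (n r : nat) (alpha : R) (C : {set rtuple n r})
  (VQ : {set 'I_n}) (colQ : 'I_n -> 'I_r) (G : {set {set 'I_n}}) :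
  (\sum_(S : rtuple n r) (Aev alpha C VQ colQ S G)%:R <= (r`!)%:R :> R).
Proof.
rewrite -natr_sum ler_nat.
rewrite (eq_bigr (fun S => if Aev alpha C VQ colQ S G then 1 else 0))%N; last by move=> S _; case: (Aev _ _ _ _ _ _).
rewrite -big_mkcond /= sum1_card.
case: (boolP [exists S, Aev alpha C VQ colQ S G]) => [/existsP [S0 AS0] | nA]; last first.
  rewrite eq_card0 // => S; rewrite !inE; apply/negbTE; move: nA; apply: contra => h.
  by apply/existsP; exists S.
set K := [set X | big_component alpha C G X].
apply: (@leq_trans #|[set f : rtuple n r in ffun_on K | injectiveb f]|).
  apply: subset_leq_card; apply/subsetP => S; rewrite !inE => /andP [_ /and4P [hb hi _ _]].
  rewrite hi andbT; apply/ffun_onP => i; rewrite inE; exact: (forallP hb i).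
rewrite card_inj_ffuns_on card_ord.
move: AS0 => /andP [_ /and4P [hb hi hc _]].
have -> : #|K| = r.
  have -> : K = S0 @: [set: 'I_r].
    apply/setP => X; rewrite inE; apply/idP/imsetP.
      move=> bX; have /existsP [i /eqP <-] := implyP (forallP hc X) bX.
      by exists i.
    by move=> [i _ ->]; exact: (forallP hb i).
  by rewrite card_imset ?cardsT ?card_ord //; apply/injectiveP.
by rewrite ffactnn.
Qed.

Unset Implicit Arguments.
Theorem mainTheorem17 (R : realFieldType) (n r : nat) (alpha delta p xi : R)
  (VQ : {set 'I_n}) (colQ : 'I_n -> 'I_r) (EQ : {set {set 'I_n}})
  (C : {set rtuple n r}) (F : rtuple n r -> {set {set 'I_n}} -> bool) :
  (2 <= r)%N ->
  0 < alpha -> 0 < delta -> delta <= alpha -> delta <= 1 / (2 * r%:R) ->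
  alpha < 1 / (4 * r%:R * (r%:R + 1)) ->
  0 < p -> p <= 1 ->
  EQ \subset pairs n -> (forall e, e \in EQ -> e \subset VQ) ->
  C != set0 ->
  (forall Pi, Pi \in C -> [&& is_cut Pi, balanced delta Pi & compatible VQ colQ Pi]) ->
  xi <= 1 ->
  (forall S : rtuple n r,
     pw_disjoint S -> compatible VQ colQ S ->
     (forall i, (1 - 4 * r%:R * alpha) * n%:R / r%:R <= (#|S i|)%:R) ->
     [/\ (forall G G' : {set {set 'I_n}}, G \subset pairs n -> G' \subset G ->
            F S G -> F S G'),
         (forall G G' : {set {set 'I_n}}, G \subset pairs n -> G' \subset pairs n ->
            G :&: ext S = G' :&: ext S -> F S G = F S G') &
         @condPr R n p (F S) (contains EQ) <= xi]) ->
  @condPr R n p (eventR alpha C VQ colQ F) (contains EQ) <= (r`!)%:R * xi.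
Proof.
move=> r2 a0 d0 da dr ar p0 p1 EQD EQV C0 hC xi1 hF.
have hq := qf_01 EQ p0 p1.
have rr : 2 <= r%:R :> R by rewrite (ler_nat R 2 r).
have rp : 0 < r%:R :> R by apply: lt_le_trans rr.
have N0 : 0 <= n%:R / r%:R :> R by rewrite divr_ge0 // ltW.
have z1 : 0 < 4 * r%:R * (r%:R + 1) :> R by rewrite !mulr_gt0 //; lra.
have z2 : 0 < 2 * r%:R :> R by rewrite !mulr_gt0 //.
have {}ar : alpha * (4 * r%:R * (r%:R + 1)) < 1 by move: ar; rewrite ltr_pdivlMr.
have {}dr : delta * (2 * r%:R) <= 1 by move: dr; rewrite ler_pdivlMr.
have hb1 : 0 <= (r%:R - 2) * (r%:R * alpha) by rewrite mulr_ge0 ?subr_ge0 // mulr_ge0 // ltW.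
have hb2 : 0 <= (r%:R - 2) * delta by rewrite mulr_ge0 ?subr_ge0 // ltW.
have hcoef : 1 + delta <= 2 * (1 - 4 * r%:R * alpha) by nra.
have hN : (1 + delta) * n%:R / r%:R <= 2 * ((1 - 4 * r%:R * alpha) * n%:R / r%:R).
  by move: (ler_wpM2r N0 hcoef); rewrite !mulrA.
have hcoef2 : 1 - 4 * r%:R * alpha <= 1 - delta by nra.
have xi0 : 0 <= xi.
  have /set0Pn [Pi PiC] := C0.
  have /and3P [cut bal comp] := hC Pi PiC.
  have szP : forall i, (1 - 4 * r%:R * alpha) * n%:R / r%:R <= (#|Pi i|)%:R.
    move=> i; have /forallP/(_ i)/andP [lo _] := bal.
    by apply: le_trans lo; move: (ler_wpM2r N0 hcoef2); rewrite !mulrA.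
  have [_ _ hb] := hF Pi (proj1 (andP cut)) comp szP.
  rewrite condPr_mu // in hb.
  by apply: le_trans hb; apply: (mu_ge0 hq) => G _; rewrite ler0n.
set A := Aev alpha C VQ colQ.
rewrite condPr_mu //.
apply: (@le_trans _ _ (mu (qf p EQ) (pairs n) (fun G => \sum_(S : rtuple n r) (A S G)%:R * (F S G)%:R))).
  apply: (mu_le hq) => G _.
  case E: (eventR alpha C VQ colQ F G); last first.
    by apply: sumr_ge0 => S _; rewrite mulr_ge0 ?ler0n.
  move: E; rewrite /eventR => /andP [rig /existsP [S /and5P [b1 b2 b3 b4 b5]]].
  rewrite (bigD1 S) //=.
  have -> : A S G = true by rewrite /A /Aev rig b1 b2 b3 b4.
  rewrite b5 mulr1 lerDl; apply: sumr_ge0 => S1 _; by rewrite mulr_ge0 ?ler0n.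
have /= E1 := mu_sum (qf p EQ) (pairs n) (fun S G => (A S G)%:R * (F S G)%:R).
rewrite (_ : mu (qf p EQ) (pairs n) _ = \sum_(S : rtuple n r) mu (qf p EQ) (pairs n) (fun G => (A S G)%:R * (F S G)%:R)); last exact: E1.
apply: (@le_trans _ _ (\sum_(S : rtuple n r) xi * mu (qf p EQ) (pairs n) (fun G => (A S G)%:R))).
  apply: ler_sum => S _.
  case: (boolP [exists G, A S G]) => [/existsP [G0 AG0]|nA]; last first.
    have hA : forall G, A S G = false.
      by move=> G; apply/negbTE; move: nA; apply: contra => h; apply/existsP; exists G.
    have -> : mu (qf p EQ) (pairs n) (fun G => (A S G)%:R * (F S G)%:R) = 0.
      by rewrite -(mu_zero (qf p EQ) (pairs n)); apply: mu_ext => G _; rewrite hA mul0r.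
    have -> : mu (qf p EQ) (pairs n) (fun G => (A S G)%:R) = 0.
      by rewrite -(mu_zero (qf p EQ) (pairs n)); apply: mu_ext => G _; rewrite hA.
    by rewrite mulr0.
  move: (AG0) => /andP [_ /and4P [hbig hinj hcov hcomp]].
  have pwS : pw_disjoint S.
    apply/forallP => i; apply/forallP => j; apply/implyP => ij.
    have /andP [/existsP [x0 /eqP Si] _] := forallP hbig i.
    have /andP [/existsP [y0 /eqP Sj] _] := forallP hbig j.
    apply: (comp_disj Si Sj); apply: contra ij => /eqP e.
    by apply/eqP; apply: (injectiveP _ hinj).
  have szS : forall i, (1 - 4 * r%:R * alpha) * n%:R / r%:R <= (#|S i|)%:R.
    by move=> i; have /andP [_ sz] := forallP hbig i; exact: ltW.
  have [Fdec Fdet Fb] := hF S pwS hcomp szS.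
  rewrite condPr_mu // in Fb.
  have H := harris hq (X := fun v => v \in ext S) (D := pairs n)
     (f := fun G => (A S G)%:R) (g := fun G => (F S G)%:R).
  apply: le_trans (H _ _ _) _.
  - move=> v H0 vD vX HD.
    case AH: (A S (H0 :\ v)); last by rewrite ler0n.
    have e : v |: H0 = v |: (H0 :\ v).
      by apply/setP => z; rewrite !inE; case: eqP.
    have vG0 : v \notin H0 :\ v by rewrite !inE eqxx.
    move: (AH) => /andP [_ /and4P [hb hi _ _]].
    have hM := ext_maxcut hC hN (forallP hb) hi vX.
    by rewrite e /A (Aev_eq _ _ _ _ (maxcut_add C0 vG0 hM)) -/A AH.
  - move=> v H0 vD vX HD.
    case FH: (F S (v |: H0)); last by rewrite ler0n.
    rewrite (Fdec (v |: H0) (H0 :\ v)) //.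
      by rewrite subUset sub1set vD HD.
    by apply/subsetP => z; rewrite !inE => /andP [_ ->]; rewrite orbT.
  - move=> v H0 vD vX HD.
    rewrite (Fdet (v |: H0) (H0 :\ v)) //.
    + by rewrite subUset sub1set vD HD.
    + by apply: subset_trans HD; apply/subsetP => z; rewrite !inE => /andP [].
    + apply/setP => z; rewrite !in_setI in_setU1 in_setD1.
      by case: (z =P v) => [->|_] /=; rewrite ?(negbTE vX) ?andbF.
  rewrite mulrC; apply: ler_wpM2r => //.
  by apply: (mu_ge0 hq) => G _; rewrite ler0n.
have /= E2 := mu_sum (qf p EQ) (pairs n) (fun S G => (A S G)%:R).
rewrite -mulr_sumr (_ : \sum_(S : rtuple n r) mu (qf p EQ) (pairs n) (fun G => (A S G)%:R) = mu (qf p EQ) (pairs n) (fun G => \sum_(S : rtuple n r) (A S G)%:R)); last by rewrite E2.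
rewrite mulrC; apply: ler_wpM2r => //.
apply: (@le_trans _ _ (mu (qf p EQ) (pairs n) (fun _ => (r`!)%:R))).
  apply: (mu_le hq) => G _; exact: count_A.
have -> : mu (qf p EQ) (pairs n) (fun _ => (r`!)%:R) = (r`!)%:R * mu (qf p EQ) (pairs n) (fun _ => 1).
  by rewrite -mu_scale; apply: mu_ext => G _; rewrite mulr1.
by rewrite mu1 mulr1.
Qed.
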